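(* Let $q=3^\alpha$ where $\alpha\geq 3$ is odd. Then there exists a finite group $H$ such that $O_3(H)\neq 1$ and $\mu(H)=\{6,9,q-1,(q+1)/2\}$.
   Context: For a finite group $X$, $\omega(X)$ is the set of orders of elements of $X$, and $\mu(X)$ is the set of elements of $\omega(X)$ maximal with respect to divisibility. $O_3(X)$ is the largest normal $3$-subgroup of $X$. *)

(* Defs.v *)
From mathcomp Require Import all_boot all_fingroup all_solvable.
Set Implicit Arguments. Unset Strict Implicit. Unset Printing Implicit Defensive.
Local Open Scope group_scope.

Definition in_omega (gT : finGroupType) (X : {set gT}) (n : nat) : Prop :=
  exists2 x, x \in X & #[x] = n.

Definition in_mu (gT : finGroupType) (X : {set gT}) (n : nat) : Prop :=
  in_omega X n /\ (forall m, in_omega X m -> (n %| m)%N -> m = n).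

(* Main.v *)
From mathcomp Require Import all_boot all_order all_algebra all_fingroup all_solvable all_field.
Require Import Defs.
From mathcomp Require Import ring zify.
Set Implicit Arguments. Unset Strict Implicit. Unset Printing Implicit Defensive.
Import GRing.Theory.
Local Open Scope ring_scope.

Lemma sum2 (R : zmodType) (F : 'I_2 -> R) : \sum_(i < 2) F i = F 0 + F 1.
Proof. by rewrite !big_ord_recl big_ord0 addr0; congr (F _ + F _); apply/val_inj. Qed.

Lemma ord2P (i : 'I_2) : i = 0 \/ i = 1.
Proof. by case: i => [[|[|i]]] Hi //; [left|right]; apply/eqP. Qed.

Section Mat.
Variable E : finFieldType.
Hypothesis ch3 : 3 \in [pchar E].
Local Notation M := 'M[E]_2.

Lemma three0 : 3%:R = 0 :> E.
Proof. exact: pcharf0. Qed.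

Lemma two_m1 : 2%:R = -1 :> E.
Proof. by apply/eqP; rewrite -subr_eq0 opprK natr1 three0. Qed.

Lemma four1 : 4%:R = 1 :> E.
Proof. by apply/eqP; rewrite -subr_eq0 -(natrB _ (isT : (1 <= 4)%N)) three0. Qed.

Lemma m1_neq1 : (-1 : E) != 1.
Proof.
apply/eqP=> h; have : 2%:R = 0 :> E by rewrite -[2%N]/(1+1)%N natrD -{1}h addNr.
by rewrite two_m1 => /eqP; rewrite oppr_eq0 oner_eq0.
Qed.

Lemma sq1 (e : E) : e ^+ 2 = 1 -> e = 1 \/ e = -1.
Proof.
move=> h; have : (e - 1) * (e + 1) = 0 by rewrite mulrDr mulr1 mulrBl mul1r -expr2 h addrA subrK subrr.
by move/eqP; rewrite mulf_eq0 subr_eq0 addr_eq0 => /orP[/eqP|/eqP]; [left|right].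
Qed.

Definition fr : E -> E := pFrobenius_aut ch3.
Lemma frE x : fr x = x ^+ 3. Proof. by []. Qed.

Definition Rt (A : M) : M := (map_mx fr A)^T.

Lemma RtM (A B : M) : Rt (A * B) = Rt B * Rt A.
Proof. by rewrite /Rt -!mulmxE map_mxM trmx_mul. Qed.
Lemma Rt1 : Rt 1 = 1.
Proof. by rewrite /Rt map_mx1 trmx1. Qed.
Lemma RtD (A B : M) : Rt (A + B) = Rt A + Rt B.
Proof. by rewrite /Rt map_mxD linearD. Qed.
Lemma RtZ (a : E) (A : M) : Rt (a *: A) = fr a *: Rt A.
Proof. by rewrite /Rt map_mxZ linearZ. Qed.
Lemma RtX (A : M) n : Rt (A ^+ n) = Rt A ^+ n.
Proof.
elim: n => [|n IH]; first by rewrite !expr0 Rt1.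
by rewrite exprS RtM IH exprSr.
Qed.
Lemma Rtsc (a : E) : Rt (a%:M) = (fr a)%:M.
Proof. by rewrite -scalemx1 RtZ Rt1 scalemx1. Qed.

End Mat.
Lemma dvd9 o : (o %| 9 -> ~~ (o %| 3) -> o = 9)%N.
Proof.
move=> h1 h2; have : (o <= 9)%N by apply: dvdn_leq.
by move: o h1 h2; do 10! case=> //.
Qed.

Lemma dvd6 o : (o %| 6 -> ~~ (o %| 2) -> ~~ (o %| 3) -> o = 6)%N.
Proof.
move=> h1 h2 h3; have : (o <= 6)%N by apply: dvdn_leq.
by move: o h1 h2 h3; do 7! case=> //.
Qed.

Lemma cop24 m : ssrnat.odd m -> coprime (2 * m) (m + 4).
Proof.
move=> hm; rewrite coprimeMl coprime2n oddD hm /=.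
rewrite /coprime gcdnDl -/(coprime m 4) (_ : 4 = 2 ^ 2)%N //.
by apply: coprimeXr; rewrite coprimen2.
Qed.
Section Two.
Variable E : fieldType.
Local Notation M := 'M[E]_2.

Definition det2 (A : M) := A 0 0 * A 1 1 - A 0 1 * A 1 0.
Definition tr2 (A : M) := A 0 0 + A 1 1.

Lemma mul2E (A B : M) i j : (A * B) i j = A i 0 * B 0 j + A i 1 * B 1 j.
Proof. by rewrite -mulmxE mxE sum2. Qed.

Lemma mx2P (A B : M) : A 0 0 = B 0 0 -> A 0 1 = B 0 1 -> A 1 0 = B 1 0 -> A 1 1 = B 1 1 -> A = B.
Proof.
move=> h1 h2 h3 h4; apply/matrixP => i j.
by case: (ord2P i) => ->; case: (ord2P j) => ->.
Qed.

Lemma sc2E (a : E) i j : (a%:M : M) i j = a * (i == j)%:R.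
Proof. by rewrite mxE mulr_natr. Qed.

Lemma CH2 (A : M) : A * A = tr2 A *: A - (det2 A)%:M.
Proof.
apply: mx2P; rewrite !mul2E !mxE /tr2 /det2 /=; ring.
Qed.

Lemma det2M (A B : M) : det2 (A * B) = det2 A * det2 B.
Proof. rewrite /det2 !mul2E; ring. Qed.

Lemma det2_1 : det2 1 = 1.
Proof. by rewrite /det2 !mxE /=; ring. Qed.

Definition adj2 (A : M) : M :=
  \matrix_(i < 2, j < 2) (if i == 0 then (if j == 0 then A 1 1 else - A 0 1)
                        else (if j == 0 then - A 1 0 else A 0 0)).

Lemma adj2K (A : M) : det2 A = 1 -> adj2 A * A = 1.
Proof.
move=> h; apply: mx2P; rewrite !mul2E !mxE /=; move: h; rewrite /det2 => h.
- by rewrite -h; ring.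
- ring.
- ring.
- by rewrite -h; ring.
Qed.

Lemma adj2K' (A : M) : det2 A = 1 -> A * adj2 A = 1.
Proof.
move=> h; apply: mx2P; rewrite !mul2E !mxE /=; move: h; rewrite /det2 => h.
- by rewrite -h; ring.
- ring.
- ring.
- by rewrite -h; ring.
Qed.

End Two.
Section Aff.
Variable E : finFieldType.
Hypothesis ch3 : 3 \in [pchar E].
Variable q : nat.
Hypothesis qn : [pchar E].-nat q.
Local Notation M := 'M[E]_2.
Local Notation Rt := (Rt ch3).

Definition act (e : E) (A : M) (v : M) (X : M) : M := e *: (A * X * Rt A) + v.

Lemma act_inj e A v : e ^+ 2 = 1 -> det2 A = 1 -> injective (act e A v).
Proof.
move=> he hA X Y; rewrite /act => /addIr /(congr1 (fun Z => e *: Z)).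
rewrite !scalerA -expr2 he !scale1r => /(congr1 (fun Z => adj2 A * Z * Rt (adj2 A))).
by rewrite !mulrA !(adj2K hA) !mul1r -!mulrA -RtM (adj2K hA) Rt1 !mulr1.
Qed.

Definition mk e A v : {perm M} :=
  match injectiveP (act e A v) with
  | ReflectT h => perm h
  | ReflectF _ => 1%g
  end.

Lemma mkE e A v : e ^+ 2 = 1 -> det2 A = 1 -> forall X, mk e A v X = act e A v X.
Proof.
move=> he hA X; rewrite /mk; case: injectiveP => h; first by rewrite permE.
by case: h; apply: act_inj.
Qed.

Definition inFq (x : E) := x ^+ q == x.
Definition inK (A : M) := (det2 A == 1) && [forall i, forall j, inFq (A i j)].

Lemma q_gt0 : (0 < q)%N.
Proof. by case/andP: qn. Qed.

Lemma fqD (x y : E) : (x + y) ^+ q = x ^+ q + y ^+ q.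
Proof. exact: exprDn_pchar. Qed.

Lemma inK_mul A B : inK A -> inK B -> inK (A * B).
Proof.
case/andP=> /eqP dA /forallP hA; case/andP=> /eqP dB /forallP hB.
apply/andP; split; first by rewrite det2M dA dB mulr1.
have hA' i j : A i j ^+ q = A i j by apply/eqP; exact: (forallP (hA i) j).
have hB' i j : B i j ^+ q = B i j by apply/eqP; exact: (forallP (hB i) j).
by apply/forallP=> i; apply/forallP=> j; rewrite /inFq mul2E fqD !exprMn !hA' !hB'.
Qed.

Lemma inK1 : inK 1.
Proof.
apply/andP; split; first by rewrite det2_1.
apply/forallP=> i; apply/forallP=> j; rewrite /inFq mxE.
by case: (i == j); rewrite /= ?expr1n ?expr0n ?gtn_eqF ?q_gt0.
Qed.

Lemma mk_mul e A v e' A' v' :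
  e ^+ 2 = 1 -> det2 A = 1 -> e' ^+ 2 = 1 -> det2 A' = 1 ->
  (mk e A v * mk e' A' v')%g = mk (e * e') (A' * A) (act e' A' v' v).
Proof.
move=> he hA he' hA'; apply/permP => X.
have he2 : (e * e') ^+ 2 = 1 by rewrite exprMn he he' mulr1.
have hA2 : det2 (A' * A) = 1 by rewrite det2M hA hA' mulr1.
rewrite permM !mkE // /act RtM.
rewrite mulrDr mulrDl scalerDr !addrA; congr (_ + _ + _).
rewrite -scalerAr -scalerAl scalerA mulrC; congr (_ *: _).
by rewrite !mulrA.
Qed.
Definition Hset : {set {perm M}} :=
  [set p | [exists e : E, [exists A : M, [exists v : M,
     [&& e ^+ 2 == 1, inK A & p == mk e A v]]]]].

Lemma inHP p : reflect (exists e A v, [/\ e ^+ 2 = 1, inK A & p = mk e A v]) (p \in Hset).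
Proof.
apply: (iffP idP).
  by rewrite inE => /existsP[e /existsP[A /existsP[v /and3P[/eqP h1 h2 /eqP h3]]]]; exists e, A, v.
move=> [e [A [v [h1 h2 h3]]]]; rewrite inE; apply/existsP; exists e; apply/existsP; exists A.
by apply/existsP; exists v; rewrite h1 h2 h3 !eqxx.
Qed.

Lemma mk_valid e A v : e ^+ 2 = 1 -> inK A -> mk e A v \in Hset.
Proof. by move=> h1 h2; apply/inHP; exists e, A, v. Qed.

Lemma det2K A : inK A -> det2 A = 1.
Proof. by case/andP=> /eqP. Qed.

Lemma Hset_group : group_set Hset.
Proof.
apply/group_setP; split.
  have -> : (1%g : {perm M}) = mk 1 1 0.
    apply/permP=> X; rewrite mkE ?expr1n ?det2_1 // perm1 /act scale1r mul1r Rt1 mulr1 addr0 //.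
  by apply: mk_valid; rewrite ?expr1n ?inK1.
move=> p1 p2 /inHP[e [A [v [h1 h2 ->]]]] /inHP[e' [A' [v' [h1' h2' ->]]]].
rewrite mk_mul ?det2K //; apply: mk_valid; first by rewrite exprMn h1 h1' mulr1.
exact: inK_mul.
Qed.

Definition Hgrp : {group {perm M}} := Group Hset_group.

Lemma iter_act e A v n X :
  iter n (act e A v) X = (e ^+ n) *: (A ^+ n * X * Rt (A ^+ n)) + iter n (act e A v) 0.
Proof.
elim: n => [|n IH]; first by rewrite /= !expr0 scale1r mul1r Rt1 mulr1 addr0.
rewrite !iterS IH /act mulrDr mulrDl scalerDr addrA; congr (_ + _ + _).
rewrite -scalerAr -scalerAl scalerA -exprS; congr (_ *: _).
by rewrite exprS RtM !mulrA.
Qed.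

Lemma mkX e A v n X : e ^+ 2 = 1 -> det2 A = 1 ->
  (mk e A v ^+ n)%g X = iter n (act e A v) X.
Proof. by move=> h1 h2; rewrite permX; apply: eq_iter; apply: mkE. Qed.

Lemma mk_order e A v n : e ^+ 2 = 1 -> det2 A = 1 ->
  (#[mk e A v]%g %| n)%N = [forall X, iter n (act e A v) X == X].
Proof.
move=> h1 h2; rewrite order_dvdn; apply/eqP/forallP => [h X|h].
  by rewrite -mkX // h perm1.
by apply/permP=> X; rewrite mkX // perm1; apply/eqP.
Qed.

Lemma mk_order1 e A v n : e ^+ 2 = 1 -> det2 A = 1 ->
  (forall X, (e ^+ n) *: (A ^+ n * X * Rt (A ^+ n)) = X) ->
  iter n (act e A v) 0 = 0 -> (#[mk e A v]%g %| n)%N.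
Proof.
move=> h1 h2 hT hw; rewrite mk_order //; apply/forallP=> X.
by rewrite iter_act hT hw addr0.
Qed.
Definition Tn e (A : M) n (X : M) := (e ^+ n) *: (A ^+ n * X * Rt (A ^+ n)).

Lemma TnD e A a b X : Tn e A (a + b) X = Tn e A a (Tn e A b X).
Proof.
rewrite /Tn -scalerAr -scalerAl scalerA !exprD RtM; congr (_ *: _).
by rewrite !mulrA.
Qed.

Lemma TnZ e A n c X : Tn e A n (c *: X) = c *: Tn e A n X.
Proof. by rewrite /Tn -scalerAr -scalerAl !scalerA mulrC. Qed.

Lemma TnDr e A n X Y : Tn e A n (X + Y) = Tn e A n X + Tn e A n Y.
Proof. by rewrite /Tn mulrDr mulrDl scalerDr. Qed.

Lemma w_add e A v a b :
  iter (a + b) (act e A v) 0 = Tn e A a (iter b (act e A v) 0) + iter a (act e A v) 0.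
Proof. by rewrite iterD iter_act. Qed.

Lemma ord_Tid e A v k : e ^+ 2 = 1 -> det2 A = 1 ->
  (forall X, Tn e A k X = X) -> (#[mk e A v]%g %| 3 * k)%N.
Proof.
move=> h1 h2 hk; apply: mk_order1 => // [X|].
  by rewrite -/(Tn e A (3 * k) X) mulSn mul2n -addnn !TnD !hk.
rewrite mulSn mul2n -addnn !w_add !hk.
have := scaler_nat 3 (iter k (act e A v) 0); rewrite (three0 ch3) scale0r.
by rewrite mulrSr mulr2n => <-.
Qed.

Lemma ord_Tneg e A v k : e ^+ 2 = 1 -> det2 A = 1 ->
  (forall X, Tn e A k X = - X) -> (#[mk e A v]%g %| 2 * k)%N.
Proof.
move=> h1 h2 hk; apply: mk_order1 => // [X|].
  by rewrite -/(Tn e A (2 * k) X) mul2n -addnn TnD !hk opprK.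
by rewrite mul2n -addnn w_add hk addNr.
Qed.
Lemma Tn_scal e A n c X : A ^+ n = c%:M -> Tn e A n X = (e ^+ n * (c * c ^+ 3)) *: X.
Proof.
move=> h; rewrite /Tn h Rtsc frE -!mulmxE mul_scalar_mx mul_mx_scalar.
by rewrite !scalerA mulrC; congr (_ *: _); ring.
Qed.

Lemma CH2' (A : M) : det2 A = 1 -> A * A = tr2 A *: A - 1.
Proof. by move=> h; rewrite CH2 h. Qed.

Lemma caseI (A : M) : det2 A = 1 -> (tr2 A) ^+ 2 = 1 -> A ^+ 3 = (- tr2 A)%:M.
Proof.
move=> hd ht; set t := tr2 A.
rewrite exprS expr2 (CH2' hd) mulrBr mulr1 -scalerAr (CH2' hd) scalerBr scalerA -expr2 ht scale1r.
by rewrite addrAC subrr add0r -scaleNr scalemx1.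
Qed.

Lemma caseII (A : M) : det2 A = 1 -> tr2 A = 0 -> A ^+ 2 = (-1)%:M.
Proof. by move=> hd ht; rewrite expr2 (CH2' hd) ht scale0r sub0r -scaleN1r scalemx1. Qed.

Lemma ord_caseI e A v : e ^+ 2 = 1 -> det2 A = 1 -> (tr2 A) ^+ 2 = 1 ->
  (#[mk e A v]%g %| 9)%N \/ (#[mk e A v]%g %| 6)%N.
Proof.
move=> he hd ht; have hT X : Tn e A 3 X = e *: X.
  rewrite (Tn_scal _ _ (caseI hd ht)) -exprS -[4%N]/(2 * 2)%N exprM sqrrN ht expr1n mulr1.
  by rewrite exprS he mulr1.
case: (sq1 he) => ee; [left|right].
  by apply: (@ord_Tid e A v 3) => // X; rewrite hT ee scale1r.
by apply: (@ord_Tneg e A v 3) => // X; rewrite hT ee scaleN1r.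
Qed.

Lemma ord_caseII e A v : e ^+ 2 = 1 -> det2 A = 1 -> tr2 A = 0 ->
  (#[mk e A v]%g %| 6)%N.
Proof.
move=> he hd ht; apply: (@ord_Tid e A v 2) => // X.
by rewrite (Tn_scal _ _ (caseII hd ht)) he mul1r -exprS -signr_odd /= expr0 scale1r.
Qed.
Section Eig.
Variables (A : M) (mu mu' : E).
Hypothesis hdet : det2 A = 1.
Hypothesis hprod : mu * mu' = 1.
Hypothesis hsum : mu + mu' = tr2 A.
Hypothesis hne : mu != mu'.

Definition dd := mu - mu'.
Lemma d_neq0 : dd != 0. Proof. by rewrite subr_eq0. Qed.

Definition Pm := dd^-1 *: (A - mu' *: 1).
Definition Qm := 1 - Pm.

Lemma AmuA : A * (A - mu' *: 1) = mu *: (A - mu' *: 1).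
Proof.
rewrite mulrBr (CH2' hdet) -hsum scalerDl -scalerAr mulr1.
by rewrite addrAC addrK scalerBr scalerA hprod scale1r.
Qed.

Lemma APm : A * Pm = mu *: Pm.
Proof. by rewrite /Pm -scalerAr AmuA !scalerA mulrC. Qed.

Lemma PmA : Pm * A = A * Pm.
Proof. by rewrite /Pm -scalerAl -scalerAr mulrBl mulrBr -scalerAl -scalerAr mul1r mulr1. Qed.

Lemma PmPm : Pm * Pm = Pm.
Proof.
rewrite {1}/Pm -scalerAl mulrBl APm -scalerAl mul1r -scalerBl.
by rewrite scalerA mulVf ?d_neq0 ?scale1r.
Qed.

Lemma PmQm : Pm * Qm = 0.
Proof. by rewrite /Qm mulrBr mulr1 PmPm subrr. Qed.

Lemma QmPm : Qm * Pm = 0.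
Proof. by rewrite /Qm mulrBl mul1r PmPm subrr. Qed.

Lemma QmQm : Qm * Qm = Qm.
Proof. by rewrite {1}/Qm mulrBl mul1r PmQm subr0. Qed.

Lemma AQm : A * Qm = mu' *: Qm.
Proof.
rewrite /Qm mulrBr mulr1 APm scalerBr.
have h : mu *: Pm - mu' *: Pm = A - mu' *: 1.
  by rewrite -scalerBl /Pm scalerA -/dd mulfV ?d_neq0 // scale1r.
rewrite -[A](subrK (mu' *: 1)) -h.
by rewrite addrAC [_ - _ - _]addrAC subrr add0r addrC.
Qed.

Lemma PQ1 : Pm + Qm = 1.
Proof. by rewrite /Qm addrC subrK. Qed.

Lemma AX n : A ^+ n = mu ^+ n *: Pm + mu' ^+ n *: Qm.
Proof.
elim: n => [|n IH]; first by rewrite !expr0 !scale1r PQ1.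
rewrite exprS IH mulrDr -(scalerAr _ A Pm) -(scalerAr _ A Qm) APm AQm !scalerA.
by rewrite !exprSr.
Qed.
Lemma QmA : Qm * A = A * Qm.
Proof. by rewrite /Qm mulrBl mulrBr mul1r mulr1 PmA. Qed.

Lemma RtPm : Rt A * Rt Pm = mu ^+ 3 *: Rt Pm.
Proof. by rewrite -RtM PmA APm RtZ frE. Qed.

Lemma RtQm : Rt A * Rt Qm = mu' ^+ 3 *: Rt Qm.
Proof. by rewrite -RtM QmA AQm RtZ frE. Qed.

Lemma comp_zero (X Z : M) lx lz e Y :
  X * A = lx *: X -> Rt A * Rt Z = lz *: Rt Z -> A * Y * Rt A = e *: Y ->
  lx * lz != e -> X * Y * Rt Z = 0.
Proof.
move=> hX hZ hY hne2.
have h1 : X * (A * Y * Rt A) * Rt Z = (lx * lz) *: (X * Y * Rt Z).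
  rewrite !mulrA hX -!scalerAl -!mulrA hZ -!scalerAr !scalerA !mulrA.
  by rewrite mulrC.
have h2 : X * (A * Y * Rt A) * Rt Z = e *: (X * Y * Rt Z).
  by rewrite hY -scalerAr -scalerAl.
move: h1; rewrite h2 => /eqP; rewrite -subr_eq0 -scalerBl scaler_eq0 subr_eq0 eq_sym.
by rewrite (negbTE hne2) => /eqP.
Qed.

Lemma fpf (Y : M) (e : E) :
  mu ^+ 4 != e -> mu * mu' ^+ 3 != e -> mu' * mu ^+ 3 != e -> mu' ^+ 4 != e ->
  A * Y * Rt A = e *: Y -> Y = 0.
Proof.
move=> n1 n2 n3 n4 hY.
have hP : Pm * A = mu *: Pm by rewrite PmA APm.
have hQ : Qm * A = mu' *: Qm by rewrite QmA AQm.
have h1 : Pm * Y * Rt Pm = 0 by apply: (comp_zero hP RtPm hY); rewrite -exprS.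
have h2 : Pm * Y * Rt Qm = 0 by apply: (comp_zero hP RtQm hY).
have h3 : Qm * Y * Rt Pm = 0 by apply: (comp_zero hQ RtPm hY).
have h4 : Qm * Y * Rt Qm = 0 by apply: (comp_zero hQ RtQm hY); rewrite -exprS.
have -> : Y = (Pm * Y + Qm * Y) * (Rt Pm + Rt Qm) by rewrite -mulrDl -RtD PQ1 Rt1 mul1r mulr1.
rewrite mulrDr (mulrDl (Pm*Y) (Qm*Y) (Rt Pm)) (mulrDl (Pm*Y) (Qm*Y) (Rt Qm)).
by rewrite h1 h2 h3 h4 !addr0.
Qed.
End Eig.
Hypothesis cardEq : #|E| = (q * q)%N.
Hypothesis q8 : (q %% 8 = 3)%N.

Lemma q_odd : ssrnat.odd q.
Proof. by rewrite -(@div.odd_mod q 8) // q8. Qed.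

Lemma q_decomp : q = (8 * (q %/ 8)%N + 3)%N.
Proof. by rewrite {1}(divn_eq q 8) q8 mulnC. Qed.

Definition NN := (q.-1 * q.+1)%N.

Lemma cardE1 : #|E| = NN.+1.
Proof.
rewrite cardEq /NN; have := q_gt0; case: q => // n _ /=; nia.
Qed.

Lemma prim_exists : exists g : E, NN.-primitive_root g.
Proof.
have hN : (0 < NN)%N.
  rewrite /NN muln_gt0 andbT; have := q_decomp; case: (q) => // [[|n]] //.
have H1 : all NN.-unity_root (enum [pred x : E | x != 0%R]).
  apply/allP=> x; rewrite mem_enum inE => x0; rewrite unity_rootE; apply/eqP.
  have h := expf_card x; rewrite cardE1 exprS in h.
  by apply: (mulfI x0); rewrite h mulr1.
have H3 : (NN <= size (enum [pred x : E | x != 0%R]))%N by rewrite -fintype.cardE cardC1 cardE1.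
have [g _ hg] := hasP (@has_prim_root E NN _ hN H1 (enum_uniq _) H3).
by exists g.
Qed.

Lemma fqN (x : E) : (- x) ^+ q = - x ^+ q.
Proof. by rewrite -mulN1r exprMn -signr_odd q_odd expr1 mulN1r. Qed.

Lemma inK_tr (A : M) : inK A -> (tr2 A) ^+ q = tr2 A.
Proof.
case/andP=> _ /forallP h; have h' i j : A i j ^+ q = A i j by apply/eqP; exact: (forallP (h i) j).
by rewrite /tr2 fqD !h'.
Qed.

Lemma powq_fix (x : E) : x != 0 -> x ^+ q = x -> x ^+ q.-1 = 1.
Proof.
move=> x0 hx; apply: (mulIf x0); rewrite mul1r -exprSr prednK //; exact: q_gt0.
Qed.

Lemma mu8 (mu mu' t : E) : mu * mu' = 1 -> mu + mu' = t -> mu != mu' -> t != 0 ->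
  (mu ^+ q = mu \/ mu ^+ q = mu') -> mu ^+ 8 != 1.
Proof.
move=> hp hs hne ht hq; apply/eqP => h8.
have hmu0 : mu != 0 by apply/eqP=> h0; move: hp; rewrite h0 mul0r => /eqP; rewrite eq_sym oner_eq0.
have sq1_contra : mu ^+ 2 != 1.
  apply/eqP=> h2; case/eqP: hne; apply: (mulfI hmu0); by rewrite hp -expr2 h2.
have hk : mu ^+ (8 * (q %/ 8)%N) = 1 by rewrite exprM h8 expr1n.
case: hq => hq.
- have e1 : q.-1 = (8 * (q %/ 8)%N + 2)%N by have := q_decomp; lia.
  have := powq_fix hmu0 hq; rewrite e1.
  by rewrite exprD hk mul1r; move/eqP; rewrite (negbTE sq1_contra).
- have h4 : mu ^+ 4 = 1.
    have : mu ^+ q.+1 = 1 by rewrite exprS hq hp.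
    have e1 : q.+1 = (8 * (q %/ 8)%N + 4)%N by have := q_decomp; lia.
    by rewrite e1 exprD hk mul1r.
  have : (mu ^+ 2 - 1) * (mu ^+ 2 + 1) = 0.
    by rewrite mulrDr mulr1 mulrBl mul1r -exprD h4 addrA subrK subrr.
  move/eqP; rewrite mulf_eq0 subr_eq0 (negbTE sq1_contra) /= addr_eq0 => /eqP h2.
  have : mu' = - mu by apply: (mulfI hmu0); rewrite hp mulrN -expr2 h2 opprK.
  by move=> hm; move: ht; rewrite -hs hm subrr eqxx.
Qed.
Lemma sqrt_exists (x : E) : x != 0 -> x ^+ q = x -> exists s, s ^+ 2 = x.
Proof.
move=> x0 hx; have [g hg] := prim_exists.
have hN : x ^+ NN = 1 by rewrite /NN exprM powq_fix // expr1n.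
have [[i hi] /= hxi] := prim_rootP hg hN.
have : (NN %| i * q.-1)%N.
  by rewrite (prim_order_dvd hg) exprM -hxi powq_fix.
rewrite /NN mulnC dvdn_pmul2r; last by have := q_decomp; lia.
case/dvdnP=> k hk; exists (g ^+ (k * (q.+1 %/ 2))).
rewrite hxi hk -exprM; congr (_ ^+ _).
have h2 : (2 %| q.+1)%N by rewrite dvdn2 /= q_odd.
by rewrite -mulnA divnK.
Qed.

Lemma spec (A : M) : inK A -> tr2 A != 0 -> (tr2 A) ^+ 2 != 1 ->
  (exists L c, [/\ (L = q.-1 \/ L = q.+1 %/ 2)%N, c ^+ 2 = 1 & A ^+ L = c%:M]) /\
  (forall Y e, e ^+ 2 = 1 -> A * Y * Rt A = e *: Y -> Y = 0).
Proof.
move=> hK ht0 ht1; have hdet := det2K hK; set t := tr2 A.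
have htq : t ^+ q = t by apply: inK_tr.
pose dl := t ^+ 2 - 1.
have hdl0 : dl != 0 by rewrite /dl subr_eq0.
have hdlq : dl ^+ q = dl by rewrite /dl fqD fqN expr1n exprAC htq.
have [s hs] := sqrt_exists hdl0 hdlq.
pose mu := - (t + s); pose mu' := t - mu.
have hroot : mu ^+ 2 - t * mu + 1 = 0.
  have -> : mu ^+ 2 - t * mu + 1 = 3%:R * (t ^+ 2 + t * s) + (s ^+ 2 - (t ^+ 2 - 1)).
    by rewrite /mu; ring.
  by rewrite (three0 ch3) mul0r add0r hs subrr.
have hp : mu * mu' = 1.
  apply/eqP; rewrite -subr_eq0; apply/eqP.
  have -> : mu * mu' - 1 = - (mu ^+ 2 - t * mu + 1) by rewrite /mu'; ring.
  by rewrite hroot oppr0.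
have hsum : mu + mu' = t by rewrite /mu' addrC subrK.
have hmu0 : mu != 0.
  by apply/eqP=> h0; move: hp; rewrite h0 mul0r => /eqP; rewrite eq_sym oner_eq0.
have hne : mu != mu'.
  apply/eqP=> he; move: ht1; rewrite -/t -hsum -he.
  have -> : (mu + mu) ^+ 2 = 4%:R * (mu * mu) by ring.
  by rewrite {2}he hp mulr1 (four1 ch3) eqxx.
have hzroot : (mu ^+ q) ^+ 2 - t * mu ^+ q + 1 = 0.
  have : (mu ^+ 2 - t * mu + 1) ^+ q = 0 by rewrite hroot expr0n gtn_eqF ?q_gt0.
  by rewrite !fqD fqN expr1n exprAC [(t * mu) ^+ q]exprMn htq.
have hq : mu ^+ q = mu \/ mu ^+ q = mu'.
  have : (mu ^+ q - mu) * (mu ^+ q - mu') = 0.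
    rewrite -hzroot -hp -hsum; ring.
  by move/eqP; rewrite mulf_eq0 !subr_eq0 => /orP[/eqP|/eqP]; [left|right].
have h8 := mu8 hp hsum hne ht0 hq.
split.
  case: hq => hq.
  - have hL := powq_fix hmu0 hq.
    have hL' : mu' ^+ q.-1 = 1 by move: (expr1n E q.-1); rewrite -hp exprMn hL mul1r.
    exists q.-1, 1; split; [by left | by rewrite expr1n |].
    by rewrite (AX hdet hp hsum hne) hL hL' !scale1r PQ1.
  - have hq1 : mu ^+ q.+1 = 1 by rewrite exprS hq hp.
    have h2 : (2 %| q.+1)%N by rewrite dvdn2 /= q_odd.
    pose L := (q.+1 %/ 2)%N; pose c := mu ^+ L.
    have hc : c ^+ 2 = 1 by rewrite /c -exprM /L divnK.
    have hc' : mu' ^+ L = c.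
      have hc0 : c != 0 by rewrite /c expf_neq0.
      apply: (mulfI hc0); rewrite /c -exprMn hp expr1n -expr2 -/c hc //.
    exists L, c; split; [by right | exact: hc |].
    by rewrite (AX hdet hp hsum hne) hc' -/c -scalerDr PQ1 scalemx1.
move=> Y e he hY; apply: (fpf hdet hp hsum hne _ _ _ _ hY).
- apply/eqP=> h; apply/(negP h8)/eqP; by rewrite -[8%N]/(4 * 2)%N exprM h he.
- apply/eqP=> h; apply/(negP h8)/eqP.
  have h' : mu' ^+ 2 = e by rewrite -h exprS mulrA hp mul1r.
  have h4 : mu' ^+ 4 = 1 by rewrite -[4%N]/(2 * 2)%N exprM h' he.
  have h4' : mu ^+ 4 = 1 by rewrite -[mu ^+ 4]mulr1 -h4 -exprMn hp expr1n.
  by rewrite -[8%N]/(4 * 2)%N exprM h4' expr1n.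
- apply/eqP=> h; apply/(negP h8)/eqP.
  have h' : mu ^+ 2 = e by rewrite -h exprS mulrA [mu' * mu]mulrC hp mul1r.
  by rewrite -[8%N]/((2 * 2) * 2)%N !exprM h' he expr1n.
- apply/eqP=> h; apply/(negP h8)/eqP.
  have h4 : mu' ^+ 8 = 1 by rewrite -[8%N]/(4 * 2)%N exprM h he.
  by rewrite -[mu ^+ 8]mulr1 -h4 -exprMn hp expr1n.
Qed.
Lemma L_even L : (L = q.-1 \/ L = q.+1 %/ 2)%N -> exists k, L = (2 * k)%N.
Proof.
have := q_decomp => hq.
case=> ->; [exists (4 * (q %/ 8)%N + 1)%N | exists (2 * (q %/ 8)%N + 1)%N]; [lia|].
rewrite {1}hq; apply/eqP; rewrite -(eqn_pmul2r (isT : (0 < 2)%N)) divnK.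
  lia.
by rewrite dvdn2 /=; move: q_odd; rewrite {1}hq => ->.
Qed.

Lemma ord_caseIII e A v : e ^+ 2 = 1 -> inK A -> tr2 A != 0 -> (tr2 A) ^+ 2 != 1 ->
  exists2 L, (L = q.-1 \/ L = q.+1 %/ 2)%N & (#[mk e A v]%g %| L)%N.
Proof.
move=> he hK ht0 ht1; have hd := det2K hK.
have [[L [c [hL hc hAL]]] hfpf] := spec hK ht0 ht1.
exists L => //.
have [k hk] := L_even hL.
have hT X : Tn e A L X = X.
  rewrite (Tn_scal _ _ hAL) hk exprM he expr1n mul1r -exprS.
  by rewrite -[4%N]/(2 * 2)%N exprM hc expr1n scale1r.
apply: mk_order1 => //.
set w := iter L (act e A v) 0.
have h1 : act e A v w = v + w.
  have ia X : iter L (act e A v) X = Tn e A L X + w by rewrite iter_act.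
  rewrite /w -iterS iterSr ia hT -/w.
  by rewrite /act mulr0 mul0r scaler0 add0r.
apply: (hfpf _ e he); move: h1; rewrite /act addrC => /addrI h1.
by rewrite -[A * w * _]scale1r -he expr2 -scalerA h1.
Qed.

Lemma ord_bound p : p \in Hset ->
  exists2 L, (L \in [:: 6; 9; q.-1; q.+1 %/ 2])%N & (#[p]%g %| L)%N.
Proof.
case/inHP=> e [A [v [he hK ->]]]; have hd := det2K hK.
have [ht1|ht1] := eqVneq ((tr2 A) ^+ 2) 1.
  by case: (ord_caseI v he hd ht1) => h; [exists 9%N | exists 6%N].
have [ht0|ht0] := eqVneq (tr2 A) 0.
  by exists 6%N => //; apply: ord_caseII.
have [L hL hdv] := ord_caseIII v he hK ht0 ht1.
by exists L => //; case: hL => ->; rewrite !inE eqxx ?orbT.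
Qed.
Lemma iter_v0 e A n : iter n (act e A 0) 0 = 0.
Proof.
by elim: n => //= n ->; rewrite /act mulr0 mul0r scaler0 addr0.
Qed.

Lemma mk_order_v0 e A n : e ^+ 2 = 1 -> det2 A = 1 ->
  (#[mk e A 0]%g %| n)%N = [forall X, Tn e A n X == X].
Proof.
move=> h1 h2; rewrite mk_order //; apply: eq_forallb => X.
by rewrite iter_act iter_v0 addr0.
Qed.

Lemma delta_entry (B C : M) a b i j : (B * delta_mx a b * C) i j = B i a * C b j.
Proof.
rewrite !mul2E !mxE.
by case: (ord2P a) => ->; case: (ord2P b) => -> /=; ring.
Qed.

Definition U2 : M := 1 + delta_mx 0 1.

Lemma U2E : [/\ U2 0 0 = 1, U2 0 1 = 1, U2 1 0 = 0 & U2 1 1 = 1].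
Proof. by rewrite /U2 !mxE /= ?addr0 ?add0r. Qed.

Lemma inK_U2 : inK U2.
Proof.
case: U2E => h00 h01 h10 h11.
apply/andP; split; first by rewrite /det2 h00 h01 h10 h11 mulr1 mulr0 subr0.
apply/forallP=> i; apply/forallP=> j; rewrite /inFq.
by case: (ord2P i) => ->; case: (ord2P j) => ->; rewrite ?h00 ?h01 ?h10 ?h11 ?expr1n ?expr0n ?gtn_eqF ?q_gt0.
Qed.

Lemma tr_U2 : (tr2 U2) ^+ 2 = 1.
Proof.
case: U2E => h00 _ _ h11; rewrite /tr2 h00 h11.
have -> : (1 + 1 : E) ^+ 2 = 4%:R by ring.
exact: four1.
Qed.

Lemma T3 e (A : M) X : e ^+ 2 = 1 -> det2 A = 1 -> (tr2 A) ^+ 2 = 1 -> Tn e A 3 X = e *: X.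
Proof.
move=> he hd ht.
rewrite (Tn_scal _ _ (caseI hd ht)) -exprS -[4%N]/(2 * 2)%N exprM sqrrN ht expr1n mulr1.
by rewrite exprS he mulr1.
Qed.
Lemma nat_neq0 n : (n %% 3 != 0)%N -> (n%:R : E) != 0.
Proof.
by move=> h; rewrite -(dvdn_pcharf ch3) /dvdn.
Qed.

Definition p9 := mk 1 U2 (delta_mx 1 1).

Lemma ord_p9 : #[p9]%g = 9%N.
Proof.
have hd := det2K inK_U2.
apply: dvd9.
  apply: (@ord_Tid 1 U2 _ 3) => //; first exact: expr1n.
  by move=> X; rewrite T3 ?expr1n ?tr_U2 ?scale1r.
rewrite mk_order ?expr1n //; apply/negP => /forallP /(_ 0) /eqP h.
have : (iter 3 (act 1 U2 (delta_mx 1 1)) 0) 0 0 = 5%:R.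
  case: U2E => h00 h01 h10 h11.
  rewrite /= /act /Rt !scale1r mulr0 mul0r add0r.
  have aE (B C : M) i j : (B + C) i j = B i j + C i j by rewrite mxE.
  have tE (B : M) i j : (B^T) i j = B j i by rewrite mxE.
  have fE (B : M) i j : (map_mx (fr ch3) B) i j = (B i j) ^+ 3 by rewrite mxE.
  have dE i j : (delta_mx 1 1 : M) i j = ((i == 1) && (j == 1))%:R by rewrite mxE.
  rewrite !(mul2E, aE, tE, fE, dE) /= !mxE /=; ring.
by rewrite h mxE => /eqP; rewrite eq_sym (negbTE (nat_neq0 _)).
Qed.

Definition p6 := mk (-1) U2 0.

Lemma ord_p6 : #[p6]%g = 6%N.
Proof.
have hd := det2K inK_U2.
have he : (-1 : E) ^+ 2 = 1 by rewrite sqrrN expr1n.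
apply: dvd6.
- apply: (@ord_Tneg (-1) U2 _ 3) => // X.
  by rewrite T3 ?tr_U2 // scaleN1r.
- rewrite mk_order_v0 //; apply/negP => /forallP /(_ (delta_mx 1 1)) /eqP h.
  have : (Tn (-1) U2 2 (delta_mx 1 1)) 0 0 = 16%:R.
    rewrite /Tn he scale1r delta_entry /Rt.
    have tE (B : M) i j : (B^T) i j = B j i by rewrite mxE.
    have fE (B : M) i j : (map_mx (fr ch3) B) i j = (B i j) ^+ 3 by rewrite mxE.
    rewrite tE fE expr2 !mul2E /U2 !mxE /=; ring.
  by rewrite h mxE /= => /eqP; rewrite eq_sym (negbTE (nat_neq0 _)).
- rewrite mk_order_v0 //; apply/negP => /forallP /(_ (delta_mx 0 0)) /eqP.
  rewrite T3 ?tr_U2 // scaleN1r => /matrixP /(_ 0 0); rewrite !mxE /=.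
  by move/eqP; rewrite (negbTE (m1_neq1 ch3)).
Qed.

Section Elts.
Variable g : E.
Hypothesis hg : NN.-primitive_root g.

Lemma g_ne0 : g != 0.
Proof.
apply/eqP=> h; have := prim_expr_order hg; rewrite h expr0n.
have : (0 < NN)%N by rewrite /NN muln_gt0 andbT; have := q_decomp; case: (q) => // [[|n]] //.
by case: NN => // n _ /eqP; rewrite eq_sym oner_eq0.
Qed.

Lemma NN_eq : NN = (q.-1 * q.+1)%N. Proof. by []. Qed.

Lemma q1_gt0 : (0 < q.-1)%N. Proof. by have := q_decomp; lia. Qed.

Definition Dg (x : E) : M := x *: delta_mx 0 0 + x^-1 *: delta_mx 1 1.

Lemma DgE (x : E) : [/\ Dg x 0 0 = x, Dg x 0 1 = 0, Dg x 1 0 = 0 & Dg x 1 1 = x^-1].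
Proof. by rewrite /Dg !mxE /=; split; ring. Qed.

Lemma DgM x y : x != 0 -> y != 0 -> Dg x * Dg y = Dg (x * y).
Proof.
move=> x0 y0; case: (DgE x) => a1 a2 a3 a4; case: (DgE y) => b1 b2 b3 b4.
case: (DgE (x * y)) => c1 c2 c3 c4.
apply: mx2P; rewrite !mul2E ?a1 ?a2 ?a3 ?a4 ?b1 ?b2 ?b3 ?b4 ?c1 ?c2 ?c3 ?c4 ?invfM; ring.
Qed.

Lemma Dg1 : Dg 1 = 1.
Proof.
by case: (DgE 1) => c1 c2 c3 c4; apply: mx2P; rewrite ?c1 ?c2 ?c3 ?c4 !mxE //= ?invr1.
Qed.

Lemma DgX x n : x != 0 -> Dg x ^+ n = Dg (x ^+ n).
Proof.
move=> x0; elim: n => [|n IH]; first by rewrite !expr0 Dg1.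
by rewrite exprS IH DgM ?expf_neq0 // -exprS.
Qed.

Definition lam := g ^+ q.+1.

Lemma lam_ne0 : lam != 0. Proof. by rewrite expf_neq0 ?g_ne0. Qed.

Lemma lam_q1 : lam ^+ q.-1 = 1.
Proof. by rewrite /lam -exprM mulnC -NN_eq prim_expr_order. Qed.

Lemma lam_q : lam ^+ q = lam.
Proof.
have := lam_q1; have := q_gt0; case: (q) => // n _ /= h.
by rewrite exprS h mulr1.
Qed.

Lemma inK_D : inK (Dg lam).
Proof.
case: (DgE lam) => c1 c2 c3 c4.
apply/andP; split; first by rewrite /det2 c1 c2 c3 c4 mulr0 subr0 mulfV ?lam_ne0.
apply/forallP=> i; apply/forallP=> j; rewrite /inFq.
case: (ord2P i) => ->; case: (ord2P j) => ->;
  rewrite ?c1 ?c2 ?c3 ?c4 ?expr0n ?gtn_eqF ?q_gt0 ?exprVn ?lam_q //.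
Qed.

Lemma m1_pow : exists m, [/\ q.-1 = (2 * m)%N, ssrnat.odd m & g ^+ (q.+1 * m) = -1].
Proof.
exists (q.-1 %/ 2)%N.
have hq := q_decomp.
have hm : q.-1 = (2 * (q.-1 %/ 2))%N by lia.
have hmo : ssrnat.odd (q.-1 %/ 2) by rewrite (_ : (q.-1 %/ 2 = 4 * (q %/ 8) + 1)%N); [rewrite oddD oddM | lia].
split => //.
set y := g ^+ _.
have hy2 : y ^+ 2 = 1 by rewrite /y -exprM -mulnA [(_ %/ 2 * 2)%N]mulnC -hm mulnC -NN_eq prim_expr_order.
case: (sq1 hy2) => // hy1.
have : (NN %| q.+1 * (q.-1 %/ 2))%N by rewrite (prim_order_dvd hg) -/y hy1.
rewrite NN_eq mulnC dvdn_pmul2l // {1}hm => /dvdn_leq.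
have : (0 < q.-1 %/ 2)%N by lia.
move=> h0 /(_ h0); lia.
Qed.

Definition pD := mk (-1) (Dg lam) 0.

Lemma ord_pD : #[pD]%g = q.-1.
Proof.
have hd := det2K inK_D.
have he : (-1 : E) ^+ 2 = 1 by rewrite sqrrN expr1n.
have [m [hm hmo hg1]] := m1_pow.
apply/eqP; rewrite eqn_dvd; apply/andP; split.
  rewrite mk_order_v0 //; apply/forallP => X.
  rewrite /Tn DgX ?lam_ne0 // lam_q1 Dg1 Rt1 mulr1 mul1r hm exprM he expr1n scale1r //.
have := dvdnn #[pD]%g; rewrite {1}mk_order_v0 // => /forallP /(_ (delta_mx 0 0)) /eqP.
set o := #[pD]%g.
move=> /matrixP /(_ 0 0); rewrite /Tn mxE delta_entry DgX ?lam_ne0 //.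
case: (DgE (lam ^+ o)) => c1 _ _ _.
have rtE (B : M) : Rt B 0 0 = (B 0 0) ^+ 3 by rewrite /Rt !mxE.
rewrite rtE c1 mxE /= -hg1 /lam -!exprM => h.
move: h; rewrite -!exprD => h.
have : (NN %| q.+1 * m * o + (q.+1 * o + q.+1 * o * 3))%N by rewrite (prim_order_dvd hg) h.
rewrite (_ : (q.+1 * m * o + (q.+1 * o + q.+1 * o * 3)) = q.+1 * ((m + 4) * o))%N; last by nia.
rewrite NN_eq mulnC dvdn_pmul2l // hm.
by rewrite Gauss_dvdr // cop24.
Qed.
Definition zet := g ^+ q.-1.
Lemma zet_ne0 : zet != 0. Proof. by rewrite expf_neq0 ?g_ne0. Qed.
Lemma zet_q1 : zet ^+ q.+1 = 1.
Proof. by rewrite /zet -exprM -NN_eq prim_expr_order. Qed.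
Lemma zet_q : zet ^+ q = zet^-1.
Proof.
apply: (mulIf zet_ne0); rewrite mulVf ?zet_ne0 // -exprSr; exact: zet_q1.
Qed.

Definition tt := zet + zet^-1.
Definition Cm : M := \matrix_(i < 2, j < 2)
  (if i == 0 then (if j == 0 then 0 else -1) else (if j == 0 then 1 else tt)).

Lemma CmE : [/\ Cm 0 0 = 0, Cm 0 1 = -1, Cm 1 0 = 1 & Cm 1 1 = tt].
Proof. by rewrite /Cm !mxE. Qed.

Lemma inK_C : inK Cm.
Proof.
case: CmE => c1 c2 c3 c4.
apply/andP; split; first by rewrite /det2 c1 c2 c3 c4 mul0r sub0r mulN1r opprK.
apply/forallP=> i; apply/forallP=> j; rewrite /inFq.
case: (ord2P i) => ->; case: (ord2P j) => ->; rewrite ?c1 ?c2 ?c3 ?c4.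
- by rewrite expr0n gtn_eqF ?q_gt0.
- by rewrite fqN expr1n.
- by rewrite expr1n.
- by rewrite /tt fqD zet_q exprVn zet_q invrK addrC.
Qed.

Lemma zet_ne : zet != zet^-1.
Proof.
apply/eqP=> h.
have : zet ^+ 2 = 1 by rewrite expr2 {2}h mulfV ?zet_ne0.
rewrite /zet -exprM => /eqP; rewrite -(prim_order_dvd hg) NN_eq dvdn_pmul2l ?q1_gt0 //.
by move/dvdn_leq => /(_ isT); have := q_decomp; lia.
Qed.

Definition pC := mk 1 Cm 0.

Lemma ord_pC : #[pC]%g = (q.+1 %/ 2)%N.
Proof.
have hd := det2K inK_C.
have he : (1 : E) ^+ 2 = 1 by rewrite expr1n.
have hp : zet * zet^-1 = 1 by rewrite mulfV ?zet_ne0.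
have hs : zet + zet^-1 = tr2 Cm by case: CmE => c1 _ _ c4; rewrite /tr2 c1 c4 add0r.
have hAX := AX hd hp hs zet_ne.
have h2 : (2 %| q.+1)%N by rewrite dvdn2 /= q_odd.
set L := (q.+1 %/ 2)%N.
have hL : q.+1 = (L * 2)%N by rewrite divnK.
apply/eqP; rewrite eqn_dvd; apply/andP; split.
  set c := zet ^+ L.
  have hc : c * c = 1 by rewrite /c -exprD addnn -mul2n mulnC -hL zet_q1.
  have hc' : zet^-1 ^+ L = c.
    apply: (mulfI (expf_neq0 L zet_ne0)); rewrite -exprMn hp expr1n -/c hc //.
  have hCL : Cm ^+ L = c%:M by rewrite hAX hc' -/c -scalerDr PQ1 scalemx1.
  rewrite mk_order_v0 //; apply/forallP => X.
  have hc2 : c ^+ 2 = 1 by rewrite expr2 hc.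
  by rewrite (Tn_scal _ _ hCL) expr1n mul1r -exprS -[4%N]/(2 * 2)%N exprM hc2 expr1n scale1r.
have := dvdnn #[pC]%g; rewrite {1}mk_order_v0 // => /forallP /(_ (delta_mx 0 0)) /eqP.
set o := #[pC]%g.
move=> /matrixP h.
have rtE (B : M) : Rt B 0 0 = (B 0 0) ^+ 3 by rewrite /Rt !mxE.
have h00 := h 0 0; have h10 := h 1 0.
rewrite /Tn expr1n scale1r delta_entry rtE mxE /= in h00.
rewrite /Tn expr1n scale1r delta_entry rtE mxE /= in h10.
have hB0 : (Cm ^+ o) 0 0 != 0.
  by apply/eqP=> h0; move: h00; rewrite h0 mul0r => /eqP; rewrite eq_sym oner_eq0.
have h10' : (Cm ^+ o) 1 0 = 0.
  by move: h10; move/eqP; rewrite mulf_eq0 expf_eq0 /= (negbTE hB0) orbF => /eqP.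
move: h10'; rewrite hAX /Pm /Qm !mxE /=.
rewrite mulr0 subr0 mulr1 sub0r mulrN -mulrBl => /eqP; rewrite mulf_eq0 invr_eq0.
rewrite (negbTE (d_neq0 zet_ne)) orbF subr_eq0 => /eqP hz.
have : zet ^+ (o * 2) = 1 by rewrite exprM expr2 {2}hz -exprMn hp expr1n.
rewrite /zet -exprM => /eqP; rewrite -(prim_order_dvd hg) NN_eq dvdn_pmul2l ?q1_gt0 //.
by rewrite hL dvdn_pmul2r.
Qed.
End Elts.

Lemma mk1E v X : mk 1 1 v X = X + v.
Proof. by rewrite mkE ?expr1n ?det2_1 // /act scale1r mul1r Rt1 mulr1. Qed.

Definition Nset : {set {perm M}} := [set mk 1 1 v | v : M].

Lemma N_group_set : group_set Nset.
Proof.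
apply/group_setP; split.
  apply/imsetP; exists 0 => //; apply/permP => X; by rewrite mk1E addr0 perm1.
move=> x y /imsetP[u _ ->] /imsetP[w _ ->]; apply/imsetP; exists (u + w) => //.
by apply/permP => X; rewrite permM !mk1E addrA.
Qed.

Definition Ngrp : {group {perm M}} := Group N_group_set.

Lemma card_N : #|Ngrp| = (#|E| ^ 4)%N.
Proof.
rewrite /= card_imset ?card_mx //.
by move=> u w h; have := congr1 (fun p : {perm M} => p 0) h; rewrite !mk1E !add0r.
Qed.

Lemma N_normal : (Ngrp <| Hgrp)%g.
Proof.
apply/andP; split.
  apply/subsetP => x /imsetP[u _ ->]; apply: mk_valid; [exact: expr1n | exact: inK1].
apply/subsetP => h Hh; rewrite inE; apply/subsetP => y; rewrite mem_conjg => hy.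
rewrite -(conjgKV h y).
move: hy; set n := (y ^ h^-1)%g => /imsetP[u _ ->].
case/inHP: Hh => e [A [v [he hK ->]]]; have hd := det2K hK.
apply/imsetP; exists (e *: (A * u * Rt A)) => //.
apply/permP => X; rewrite /conjg !permM mk1E.
set Y := ((mk e A v)^-1)%g X.
have hY : X = mk e A v Y by rewrite /Y permKV.
by rewrite hY mk1E !mkE // /act mulrDr mulrDl scalerDr addrAC.
Qed.

Lemma O3_ne1 : ('O_3(Hgrp) != 1)%g.
Proof.
have q3 : (3%N).-nat q by rewrite -(eq_pnat _ (pcharf_eq ch3)).
have pN : ((3%N).-group Ngrp)%g by rewrite /pgroup card_N pnatX cardEq pnatM q3.
have sub := pcore_max pN N_normal.
apply/eqP => h.
have : mk 1 1 (delta_mx 0 0) \in ('O_3(Hgrp))%g.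
  by apply: (subsetP sub); apply/imsetP; exists (delta_mx 0 0).
rewrite h inE => /eqP /permP /(_ 0); rewrite mk1E perm1 add0r.
by move=> /matrixP /(_ 0 0); rewrite !mxE /= => /eqP; rewrite oner_eq0.
Qed.

Hypothesis q27 : (27 <= q)%N.
Hypothesis q3d : (3 %| q)%N.

Definition Lst := [:: 6; 9; q.-1; q.+1 %/ 2]%N.

Lemma lst_anti a b : a \in Lst -> b \in Lst -> (a %| b)%N -> a = b.
Proof.
have hq := q_decomp; have [d hd] := dvdnP q3d.
have h2 : (q.+1 %/ 2 * 2 = q.+1)%N by rewrite divnK // dvdn2 /= q_odd.
rewrite !inE => /or4P [] /eqP -> /or4P [] /eqP -> // hdv;
  (have hle := dvdn_leq _ hdv; move/dvdnP: hdv => [c hc]); try (have := hle isT; lia); try (have : (0 < q.-1)%N by lia); try (move=> /hle; lia); try lia.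
have h3 : (q.+1 %/ 2 %| q.+1 %/ 2 * 2 - q.-1)%N.
  by apply: dvdn_sub; [apply: dvdn_mulr; apply: dvdnn | apply/dvdnP; exists c].
have h4 : (q.+1 %/ 2 * 2 - q.-1 = 2)%N by lia.
rewrite h4 in h3; move/dvdn_leq: h3 => /(_ isT); lia.
Qed.

Lemma lst_omega (g : E) : NN.-primitive_root g -> forall L, L \in Lst -> in_omega Hgrp L.
Proof.
move=> hg L; rewrite !inE => /or4P [] /eqP ->.
- exists p6; last exact: ord_p6.
  by apply: mk_valid; [rewrite sqrrN expr1n | exact: inK_U2].
- exists p9; last exact: ord_p9.
  by apply: mk_valid; [rewrite expr1n | exact: inK_U2].
- exists (pD g); last exact: ord_pD.
  by apply: mk_valid; [rewrite sqrrN expr1n | exact: inK_D].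
- exists (pC g); last exact: ord_pC.
  by apply: mk_valid; [rewrite expr1n | exact: inK_C].
Qed.

Lemma main_sec : ('O_3(Hgrp) != 1)%g /\ (forall n, in_mu Hgrp n <-> n \in Lst).
Proof.
split; first exact: O3_ne1.
have [g hg] := prim_exists.
have hom := lst_omega hg.
move=> n; split.
  case=> [[x Hx <-]] hmax.
  have [L hL hdv] := ord_bound Hx.
  by rewrite -(hmax L (hom L hL) hdv).
move=> hn; split; first exact: hom.
move=> m [x Hx <-] hdv.
have [L hL hdvL] := ord_bound Hx.
have := lst_anti hn hL (dvdn_trans hdv hdvL) => hnL.
by apply/eqP; rewrite eqn_dvd hdv andbT hnL hdvL.
Qed.
End Aff.

Lemma pow3_mod8 k : ((3 ^ (2 * k + 1)) %% 8 = 3)%N.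
Proof.
elim: k => // k IH.
rewrite (_ : (2 * k.+1 + 1 = (2 * k + 1) + 2)%N); last by lia.
by rewrite expnD -modnMml IH.
Qed.

Local Close Scope ring_scope.
Local Open Scope group_scope.

Theorem lemma3p2 (alpha : nat) (Hodd : odd alpha) (H3 : (3 <= alpha)%N) :
  let q := (3 ^ alpha)%N in
  exists (gT : finGroupType) (H : {group gT}),
    'O_3(H) != 1 /\
    (forall n, in_mu H n <-> n \in [:: 6; 9; q.-1; q.+1 %/ 2]%N).
Proof.
move=> q.
have hk : (0 < alpha * 2)%N by lia.
have [E ch3 cE] := pPrimePowerField (isT : prime 3) hk.
have qn : ([pchar E]%R).-nat q by rewrite (eq_pnat _ (pcharf_eq ch3)) /q pnatX pnat_id.
have cardEq : #|E| = (q * q)%N by rewrite cE expnM mulnn.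
have [k hk'] : exists k, alpha = (2 * k + 1)%N.
  exists alpha./2; rewrite -{1}(odd_double_half alpha) Hodd -muln2; lia.
have q8 : (q %% 8 = 3)%N by rewrite /q hk' pow3_mod8.
have q27 : (27 <= q)%N by rewrite /q (_ : 27 = 3 ^ 3)%N // leq_exp2l.
have q3d : (3 %| q)%N by rewrite /q (_ : alpha = 1 + (alpha - 1))%N ?expnD ?dvdn_mulr //; lia.
have [h1 h2] := main_sec ch3 qn cardEq q8 q27 q3d.
by eexists; exists (Hgrp ch3 qn).
Qed.
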